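(* Let $G$ be an embedded planar graph whose edge set $E$ consists of line segments, let $\mathcal{R}_{W_0}$ be a finite set of disjoint fat regions contained in a root window $W_0$, let $W\subseteq W_0$ be any window, and let $m,M$ be positive integers. Then there exists a favorable cut of $W$, i.e., an axis-parallel cut $\ell$ of $W$ whose chargeable length is at least $|\sigma_m(\ell)|+|\Sigma_M(\ell)|$.
   Context: A window is an axis-aligned rectangle; a cut of $W$ is an axis-parallel line $\ell$ intersecting $W$. The $m$-span $\sigma_m(\ell)$: the set $\ell\cap(E\cap\mathrm{int}(W))$ consists of subsegments (possibly points) of $\ell$; let $p_1,\dots,p_\xi$ be their endpoints in order along $\ell$. If $\xi\le 2(m-1)$, $\sigma_m(\ell)=\emptyset$; otherwise $\sigma_m(\ell)$ is the segment $p_mp_{\xi-m+1}$. The $M$-region-span $\Sigma_M(\ell)$: let $ab=\ell\cap W$ and let $\xi'$ be the number of axis-aligned bounding boxes of regions of $\mathcal{R}_{W_0}$ that $ab$ crosses (not counting boxes containing the endpoints $a$ or $b$). If $\xi'<2M-1$, $\Sigma_M(\ell)=\emptyset$; otherwise $\Sigma_M(\ell)$ is the segment $a_Mb_M$ on $\ell$, where $a_M$ is the $M$th point at which $ab$ enters a bounding box when traversed from $a$ toward $b$, and $b_M$ is the $M$th such entry point when traversed from $b$ toward $a$. $|\cdot|$ denotes length. A point $p\in W$ is $m$-dark with respect to horizontal cuts if the upward and downward vertical rays from $p$ each cross at least $m$ edges of $E$ before reaching $\partial W$, and $M$-region-dark with respect to horizontal cuts if these rays each cross at least $M$ bounding boxes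 of regions of $\mathcal{R}_{W_0}$ before reaching $\partial W$; darkness with respect to vertical cuts is defined analogously with horizontal rays. The chargeable length of a horizontal (resp. vertical) cut $\ell$ is the length of the set of points of $\ell\cap W$ that are $m$-dark with respect to horizontal (resp. vertical) cuts plus the length of the set of points of $\ell\cap W$ that are $M$-region-dark with respect to horizontal (resp. vertical) cuts. A region $P$ is fat if $\mathrm{area}(P)\ge\alpha[\mathrm{diam}(P)]^2$ for a fixed constant $\alpha>0$. *)

(* Defs.v *)
From HB Require Import structures.
From mathcomp Require Import all_boot all_order all_algebra.
From mathcomp Require Import all_classical all_reals all_analysis.
Set Implicit Arguments. Unset Strict Implicit. Unset Printing Implicit Defensive.
Import Order.TTheory GRing.Theory Num.Theory.
Import numFieldNormedType.Exports.
Local Open Scope classical_set_scope.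
Local Open Scope ring_scope.

Section Geometry.
Variable R : realType.

Definition pt2 := (R * R)%type.
Definition edge := (pt2 * pt2)%type.

Definition seg (e : edge) : set pt2 :=
  [set p | exists t : R, 0 <= t <= 1 /\
     p = ((1 - t) * e.1.1 + t * e.2.1, (1 - t) * e.1.2 + t * e.2.2)].

Definition planar_straight_line (E : seq edge) : Prop :=
  uniq E /\ (forall e, e \in E -> e.1 != e.2) /\
  forall e e', e \in E -> e' \in E -> e != e' ->
    forall p, seg e p -> seg e' p ->
      (p = e.1 \/ p = e.2) /\ (p = e'.1 \/ p = e'.2).

Record window := Window { wx1 : R; wx2 : R; wy1 : R; wy2 : R }.

Definition window_wf (W : window) : Prop := wx1 W < wx2 W /\ wy1 W < wy2 W.

Definition inW (W : window) : set pt2 :=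
  [set p | wx1 W <= p.1 <= wx2 W /\ wy1 W <= p.2 <= wy2 W].

Definition intW (W : window) : set pt2 :=
  [set p | wx1 W < p.1 < wx2 W /\ wy1 W < p.2 < wy2 W].

Definition subwindow (W W0 : window) : Prop := inW W `<=` inW W0.

Definition pdist (p q : pt2) : R := Num.sqrt ((p.1 - q.1) ^+ 2 + (p.2 - q.2) ^+ 2).

Definition diam (P : set pt2) : R :=
  sup [set d | exists p q, P p /\ P q /\ d = pdist p q].

Definition area (P : set pt2) : \bar R :=
  ((@lebesgue_measure R) \x (@lebesgue_measure R))%E P.

Definition region (P : set pt2) : Prop :=
  P !=set0 /\ measurable P /\
  exists r : R, forall p, P p -> `|p.1| <= r /\ `|p.2| <= r.

Definition fat (alpha : R) (P : set pt2) : Prop :=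
  ((alpha * diam P ^+ 2)%:E <= area P)%E.

Definition bbox (P : set pt2) : set pt2 :=
  [set p | inf (fst @` P) <= p.1 <= sup (fst @` P) /\
           inf (snd @` P) <= p.2 <= sup (snd @` P)].

(* A cut is described by an orientation h (true = horizontal line y = c,
   false = vertical line x = c) and its position c.  For a cut of
   orientation h, "along" coordinates t parametrize the line and "across"
   coordinates s are perpendicular to it. *)
Definition mkpt (h : bool) (t s : R) : pt2 := if h then (t, s) else (s, t).
Definition alo (h : bool) (W : window) : R := if h then wx1 W else wy1 W.
Definition ahi (h : bool) (W : window) : R := if h then wx2 W else wy2 W.
Definition clo (h : bool) (W : window) : R := if h then wy1 W else wx1 W.
Definition chi (h : bool) (W : window) : R := if h then wy2 W else wx2 W.

Definition is_cut (W : window) (h : bool) (c : R) : Prop := clo h W <= c <= chi h W.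

Definition atleast (T : eqType) (n : nat) (P : T -> Prop) : Prop :=
  exists s : seq T, uniq s /\ (n <= size s)%N /\ forall x, x \in s -> P x.

Definition cutE (E : seq edge) (W : window) (h : bool) (c : R) : set R :=
  [set t | intW W (mkpt h t c) /\ exists e, e \in E /\ seg e (mkpt h t c)].

(* endpoints of the subsegments forming a subset S of the line: its frontier *)
Definition endpts (S : set R) : set R := closure S `\` interior S.

(* m-span (along-coordinates): the segment p_m p_{xi-m+1}, empty when
   xi <= 2(m-1); t lies in it iff at least m endpoints are <= t and at least
   m endpoints are >= t. *)
Definition mspan (m : nat) (E : seq edge) (W : window) (h : bool) (c : R) : set R :=
  [set t | atleast m (fun x => endpts (cutE E W h c) x /\ x <= t) /\
           atleast m (fun x => endpts (cutE E W h c) x /\ t <= x)].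

Definition crossed k (P : 'I_k -> set pt2) (W : window) (h : bool) (c : R)
    (i : 'I_k) : Prop :=
  (exists t, alo h W <= t <= ahi h W /\ bbox (P i) (mkpt h t c)) /\
  ~ bbox (P i) (mkpt h (alo h W) c) /\ ~ bbox (P i) (mkpt h (ahi h W) c).

Definition box_on_cut k (P : 'I_k -> set pt2) (W : window) (h : bool) (c : R)
    (i : 'I_k) : set R :=
  [set t | alo h W <= t <= ahi h W /\ bbox (P i) (mkpt h t c)].

(* pt2 where ab enters box i, traversing from a to b, resp. from b to a *)
Definition entry_a k (P : 'I_k -> set pt2) W h c i : R := inf (box_on_cut P W h c i).
Definition entry_b k (P : 'I_k -> set pt2) W h c i : R := sup (box_on_cut P W h c i).

(* M-region-span (along-coordinates): empty if xi' < 2M-1, else a_M b_M,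
   with entry points counted box by box *)
Definition rspan (M : nat) k (P : 'I_k -> set pt2) (W : window) (h : bool) (c : R)
    : set R :=
  [set t | atleast (2 * M - 1) (crossed P W h c) /\
    atleast M (fun i => crossed P W h c i /\ entry_a P W h c i <= t) /\
    atleast M (fun i => crossed P W h c i /\ t <= entry_b P W h c i)].

(* darkness with respect to cuts of orientation h, of the pt2 of along-
   coordinate t on the line of orientation h at position c; the rays are
   perpendicular to the cut and stop at the boundary of W *)
Definition ray_up (W : window) (h : bool) (c : R) : set R := [set s | c < s < chi h W].
Definition ray_down (W : window) (h : bool) (c : R) : set R := [set s | clo h W < s < c].

Definition mdark (m : nat) (E : seq edge) (W : window) (h : bool) (c t : R) : Prop :=
  intW W (mkpt h t c) /\
  atleast m (fun e => e \in E /\ exists s, ray_up W h c s /\ seg e (mkpt h t s)) /\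
  atleast m (fun e => e \in E /\ exists s, ray_down W h c s /\ seg e (mkpt h t s)).

Definition Mrdark (M : nat) k (P : 'I_k -> set pt2) (W : window) (h : bool) (c t : R)
    : Prop :=
  intW W (mkpt h t c) /\
  atleast M (fun i => exists s, ray_up W h c s /\ bbox (P i) (mkpt h t s)) /\
  atleast M (fun i => exists s, ray_down W h c s /\ bbox (P i) (mkpt h t s)).

Definition chargeable (m M : nat) (E : seq edge) k (P : 'I_k -> set pt2)
    (W : window) (h : bool) (c : R) : \bar R :=
  (lebesgue_measure [set t | mdark m E W h c t] +
   lebesgue_measure [set t | Mrdark M P W h c t])%E.

Definition favorable (m M : nat) (E : seq edge) k (P : 'I_k -> set pt2)
    (W : window) (h : bool) (c : R) : Prop :=
  is_cut W h c /\
  (lebesgue_measure (mspan m E W h c) + lebesgue_measure (rspan M P W h c)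
     <= chargeable m M E P W h c)%E.

End Geometry.

(* Main.v *)
Require Import Defs.
From HB Require Import structures.
From mathcomp Require Import all_boot all_order all_algebra.
From mathcomp Require Import all_classical all_reals all_analysis.
From mathcomp Require Import ring lra.
From mathcomp Require Import measurable_realfun.
Import Order.TTheory GRing.Theory Num.Theory.
Import numFieldNormedType.Exports.
Local Open Scope classical_set_scope.
Local Open Scope ring_scope.
Section Meas.
Variable R : realType.
Notation Q := (R * R)%type.

Definition mb (b : Q -> bool) := measurable [set q : Q | b q].
Definition mf (f : Q -> R) := measurable_fun setT f.

Lemma mb_and a b : mb a -> mb b -> mb (fun q => a q && b q).
Proof.
move=> ma mb'; rewrite /mb.
have -> : [set q : Q | a q && b q] = [set q | a q] `&` [set q | b q].
  by apply/seteqP; split => q /=; [move/andP|move=> [-> ->]].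
exact: measurableI.
Qed.

Lemma mb_not a : mb a -> mb (fun q => ~~ a q).
Proof.
move=> ma; rewrite /mb.
have -> : [set q : Q | ~~ a q] = ~` [set q | a q].
  by apply/seteqP; split => q /=; [move/negP|move/negP].
exact: measurableC.
Qed.

Lemma mb_or a b : mb a -> mb (fun q => b q) -> mb (fun q => a q || b q).
Proof.
move=> ma mb'; rewrite /mb.
have -> : [set q : Q | a q || b q] = [set q | a q] `|` [set q | b q].
  by apply/seteqP; split => q /=; [move/orP|move=> [] ->//; rewrite orbT].
exact: measurableU.
Qed.

Lemma mb_true : mb (fun=> true).
Proof. rewrite /mb; have -> : [set q : Q | true] = setT by apply/seteqP; split.
exact: measurableT. Qed.

Lemma mf_fst : mf fst. Proof. exact: measurable_fst. Qed.
Lemma mf_snd : mf snd. Proof. exact: measurable_snd. Qed.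
Lemma mf_cst (x : R) : mf (fun=> x). Proof. exact: measurable_cst. Qed.
Lemma mf_add (f g : Q -> R) : mf f -> mf g -> mf (fun q => f q + g q).
Proof. by move=> ? ?; exact: measurable_realfun.measurable_funD. Qed.
Lemma mf_sub (f g : Q -> R) : mf f -> mf g -> mf (fun q => f q - g q).
Proof. by move=> ? ?; exact: measurable_realfun.measurable_funB. Qed.
Lemma mf_mul (f g : Q -> R) : mf f -> mf g -> mf (fun q => f q * g q).
Proof. by move=> ? ?; exact: measurable_realfun.measurable_funM. Qed.

Lemma mb_lt (f g : Q -> R) : mf f -> mf g -> mb (fun q => f q < g q).
Proof.
move=> hf hg; rewrite /mb.
have h := @mf_sub _ _ hg hf.
have := h measurableT _ (measurable_itv `]0, +oo[).
rewrite setTI; congr measurable; apply/seteqP; split => q /=;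
  by rewrite in_itv /= andbT subr_gt0.
Qed.

Lemma mb_le (f g : Q -> R) : mf f -> mf g -> mb (fun q => f q <= g q).
Proof.
move=> hf hg; rewrite /mb.
have h := @mf_sub _ _ hg hf.
have := h measurableT _ (measurable_itv `[0, +oo[).
rewrite setTI; congr measurable; apply/seteqP; split => q /=;
  by rewrite in_itv /= andbT subr_ge0.
Qed.

Lemma mb_eq (f g : Q -> R) : mf f -> mf g -> mb (fun q => f q == g q).
Proof.
move=> hf hg.
have -> : (fun q => f q == g q) = (fun q => (f q <= g q) && (g q <= f q)).
  by apply/funext => q; rewrite eq_le.
by apply: mb_and; apply: mb_le.
Qed.

Lemma mb_in (f : Q -> R) (s : seq R) : mf f -> mb (fun q => f q \in s).
Proof.
move=> hf; elim: s => [|x s IH].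
  rewrite /mb; have -> : [set q : Q | f q \in [::]] = set0.
    by apply/seteqP; split => q //=; rewrite in_nil.
  exact: measurable0.

have -> : (fun q => f q \in x :: s) = (fun q => (f q == x) || (f q \in s)).
  by apply/funext => q; rewrite in_cons.
by apply: mb_or => //; apply: mb_eq => //; exact: mf_cst.
Qed.

Lemma mb_card (I : finType) (n : nat) (b : I -> Q -> bool) :
  (forall i, mb (b i)) -> mb (fun q => n <= #|[pred i | b i q]|)%N.
Proof.
move=> hb; rewrite /mb.
have -> : [set q : Q | (n <= #|[pred i | b i q]|)%N] =
  \big[setU/set0]_(S <- enum [set S : {set I} | (n <= #|S|)%N]%SET)
     \big[setI/setT]_(i <- enum S) [set q | b i q].
  rewrite -bigcup_seq; apply/seteqP; split => q /=.
    move=> hq; exists [set i | b i q]%SET.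
      by rewrite /= mem_enum inE cardsE.
    rewrite -bigcap_seq => i /=; rewrite mem_enum inE; exact.
  move=> [S /=]; rewrite mem_enum inE => hS; rewrite -bigcap_seq => hS'.
  apply: (leq_trans hS); apply: subset_leq_card; apply/fintype.subsetP => i iS.
  by rewrite inE; apply: hS' => /=; rewrite mem_enum.
apply: bigsetU_measurable => S _; apply: bigsetI_measurable => i _; exact: hb.
Qed.

End Meas.
Arguments mf {R}. Arguments mb {R}.

Section Geo.
Variable R : realType. Variable E : seq (edge R). Variable W : window R. Variables m M k : nat. Variable P : 'I_k -> set (pt2 R).
Definition acr (g : bool) (p : pt2 R) : R := if g then p.2 else p.1.
Definition alg (g : bool) (p : pt2 R) : R := if g then p.1 else p.2.
Definition tau (g : bool) (e : edge R) (c : R) : R := alg g e.1 +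
  (c - acr g e.1) * (alg g e.2 - alg g e.1) / (acr g e.2 - acr g e.1).
Definition trans (g : bool) (e : edge R) (c : R) : bool :=
  (acr g e.1 < c < acr g e.2) || (acr g e.2 < c < acr g e.1).
Definition upb (g : bool) (e : edge R) (c t : R) : bool := trans g e c && (t < tau g e c) && (tau g e c < ahi g W).
Definition dnb (g : bool) (e : edge R) (c t : R) : bool := trans g e c && (alo g W < tau g e c) && (tau g e c < t).
Definition badl (g : bool) : seq R := [seq acr g e.1 | e <- E] ++ [seq acr g e.2 | e <- E].
Definition inWb (g : bool) (c t : R) : bool := (clo g W < c < chi g W) && (alo g W < t < ahi g W).
Definition Gb (g : bool) (c t : R) : bool := (c \notin badl g) && (t \notin badl (~~ g)) && inWb g c t &&
   (m <= #|[pred e : seq_sub E | upb g (val e) c t]|)%N &&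
   (m <= #|[pred e : seq_sub E | dnb g (val e) c t]|)%N.

Definition X1 (i : 'I_k) : R := inf (fst @` P i).
Definition X2 (i : 'I_k) : R := sup (fst @` P i).
Definition Y1 (i : 'I_k) : R := inf (snd @` P i).
Definition Y2 (i : 'I_k) : R := sup (snd @` P i).
Definition A1 (g : bool) (i : 'I_k) : R := if g then X1 i else Y1 i.
Definition A2 (g : bool) (i : 'I_k) : R := if g then X2 i else Y2 i.
Definition C1 (g : bool) (i : 'I_k) : R := if g then Y1 i else X1 i.
Definition C2 (g : bool) (i : 'I_k) : R := if g then Y2 i else X2 i.
Definition rup (g : bool) (i : 'I_k) (c t : R) : bool := (C1 g i <= c <= C2 g i) && (t < A2 g i) &&
  (A1 g i < ahi g W) && (A1 g i <= A2 g i).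
Definition rdn (g : bool) (i : 'I_k) (c t : R) : bool := (C1 g i <= c <= C2 g i) && (A1 g i < t) &&
  (alo g W < A2 g i) && (A1 g i <= A2 g i).
Definition Hb (g : bool) (c t : R) : bool := (c \notin badl g) && (t \notin badl (~~ g)) && inWb g c t &&
   (M <= #|[pred i | rup g i c t]|)%N && (M <= #|[pred i | rdn g i c t]|)%N.

Definition Gs g : set (R * R) := [set q | Gb g q.1 q.2].
Definition Hs g : set (R * R) := [set q | Hb g q.1 q.2].

Lemma mf_tau g e : mf (fun q : R * R => tau g e q.1).
Proof.
rewrite /tau; apply: mf_add; first exact: mf_cst.
apply: mf_mul; last exact: mf_cst.
apply: mf_mul; last exact: mf_cst.
apply: mf_sub; [exact: mf_fst|exact: mf_cst].
Qed.

Ltac mbt := repeat first [ apply: mb_and | apply: mb_or | apply: mb_not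
  | apply: mb_lt | apply: mb_le | apply: mb_in | apply: mf_tau
  | apply: mf_fst | apply: mf_snd | apply: mf_cst ].

Lemma measurable_Gs g : measurable (Gs g).
Proof.
rewrite /Gs /Gb /inWb.
apply: mb_and; last by apply: mb_card => e; rewrite /dnb /trans; mbt.
apply: mb_and; last by apply: mb_card => e; rewrite /upb /trans; mbt.
mbt.
Qed.

Lemma measurable_Hs g : measurable (Hs g).
Proof.
rewrite /Hs /Hb /inWb.
apply: mb_and; last by apply: mb_card => e; rewrite /rdn; mbt.
apply: mb_and; last by apply: mb_card => e; rewrite /rup; mbt.
mbt.
Qed.


Lemma seg_mkpt g (e : edge R) (s c : R) : seg e (mkpt g s c) <->
  exists l : R, 0 <= l <= 1 /\ s = (1 - l) * alg g e.1 + l * alg g e.2 /\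
    c = (1 - l) * acr g e.1 + l * acr g e.2.
Proof.
rewrite /seg /mkpt /alg /acr; case: g => /=; split.
- by move=> [l [hl [-> ->]]]; exists l.
- by move=> [l [hl [-> ->]]]; exists l.
- by move=> [l [hl [-> ->]]]; exists l.
- by move=> [l [hl [-> ->]]]; exists l.
Qed.

Lemma trans_seg g e (c : R) : trans g e c -> seg e (mkpt g (tau g e c) c).
Proof.
rewrite /trans /tau => htr; apply/seg_mkpt.
move: htr; set u1 := acr g e.1; set u2 := acr g e.2; set v1 := alg g e.1; set v2 := alg g e.2.
clearbody u1 u2 v1 v2 => htr.
have hd : u2 - u1 != 0.
  rewrite subr_eq0; apply/eqP => h; move: htr; rewrite h.
  by case/orP => /andP[a b]; have := lt_trans a b; rewrite ltxx.
exists ((c - u1) / (u2 - u1)); split; last split.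
- clear hd; move: htr; case/orP => /andP[a b].
  + have d0 : 0 < u2 - u1 by lra.
    apply/andP; split.
      by apply: divr_ge0; lra.
    by rewrite ler_pdivrMr // mul1r; lra.
  + have d1 : 0 < u1 - u2 by lra.
    have -> : (c - u1) / (u2 - u1) = (u1 - c) / (u1 - u2).
      by rewrite -mulrNN -invrN !opprB.
    apply/andP; split.
      by apply: divr_ge0; lra.
    by rewrite ler_pdivrMr // mul1r; lra.
- by field.
- by field.
Qed.


Lemma seg_trans g e (s c : R) : c != acr g e.1 -> c != acr g e.2 ->
  seg e (mkpt g s c) -> trans g e c /\ s = tau g e c.
Proof.
move=> h1 h2 /seg_mkpt [l [/andP [l0 l1] [hs hc]]].
rewrite /trans /tau; move: h1 h2 hs hc.
set u1 := acr g e.1; set u2 := acr g e.2; set v1 := alg g e.1; set v2 := alg g e.2.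
clearbody u1 u2 v1 v2 => h1 h2 hs hc.
have ln0 : l != 0.
  apply/eqP => hl; move: h1; rewrite hc hl; apply/negP; rewrite negbK.
  by apply/eqP; ring.
have ln1 : l != 1.
  apply/eqP => hl; move: h2; rewrite hc hl; apply/negP; rewrite negbK.
  by apply/eqP; ring.
have hd : u2 - u1 != 0.
  apply/eqP => hd; move: h1; rewrite hc; apply/negP; rewrite negbK.
  apply/eqP; have -> : u2 = u1 by apply/eqP; rewrite -subr_eq0 hd.
  ring.
have hl : l = (c - u1) / (u2 - u1) by rewrite hc; field.
split; last by rewrite hs hl; field.
have l0' : 0 < l by rewrite lt_neqAle eq_sym ln0.
have l1' : l < 1 by rewrite lt_neqAle ln1.
clear ln0 ln1 h1 h2 hl hs.
have [d0|d0] := ltP 0 (u2 - u1).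
- apply/orP; left; apply/andP; split; rewrite hc; nra.
- have d1 : u2 - u1 < 0.
    by rewrite lt_neqAle d0 andbT.
  clear hd d0; apply/orP; right; apply/andP; split; rewrite hc; nra.
Qed.

Definition Dk g c t := intW W (mkpt g t c) /\
  atleast m (fun e => e \in E /\ exists s, t < s < ahi g W /\ seg e (mkpt g s c)) /\
  atleast m (fun e => e \in E /\ exists s, alo g W < s < t /\ seg e (mkpt g s c)).

Definition RD g c t := intW W (mkpt g t c) /\
  atleast M (fun i => exists s, t < s < ahi g W /\ bbox (P i) (mkpt g s c)) /\
  atleast M (fun i => exists s, alo g W < s < t /\ bbox (P i) (mkpt g s c)).

Lemma intW_mkpt g (t c : R) : intW W (mkpt g t c) <-> inWb g c t.
Proof.
rewrite /intW /mkpt /inWb; case: g => /=; split.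
- by move=> [h1 h2]; apply/andP; split.
- by move/andP => [h1 h2]; split.
- by move=> [h1 h2]; apply/andP; split.
- by move/andP => [h1 h2]; split.
Qed.

Lemma mdark_of_Dk g (c c' : R) : Dk (~~ g) c' c -> mdark m E W g c c'.
Proof. by case: g. Qed.

Lemma Mrdark_of_RD g (c c' : R) : RD (~~ g) c' c -> Mrdark M P W g c c'.
Proof. by case: g. Qed.

Lemma atleast_card_sub n (p : pred (seq_sub E)) (Q : edge R -> Prop) :
  (forall x : seq_sub E, p x -> Q (val x)) -> (n <= #|p|)%N ->
  atleast n (fun e => e \in E /\ Q e).
Proof.
move=> hQ hn; exists (map val (enum p)); split; last split.
- by rewrite map_inj_uniq ?enum_uniq //; exact: val_inj.
- by rewrite size_map -cardE.
- move=> x /mapP [y]; rewrite mem_enum => py ->; split; first exact: (valP y).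
  exact: hQ.
Qed.

Lemma atleast_card_I n (p : pred 'I_k) (Q : 'I_k -> Prop) :
  (forall i, p i -> Q i) -> (n <= #|p|)%N -> atleast n Q.
Proof.
move=> hQ hn; exists (enum p); split; last split.
- exact: enum_uniq.
- by rewrite -cardE.
- by move=> x; rewrite mem_enum; exact: hQ.
Qed.

Lemma Gb_Dk g (c t : R) : Gb g c t -> Dk g c t.
Proof.
rewrite /Gb => /andP [/andP [/andP [_ hW] hu] hd].
split; first exact/intW_mkpt.
split.
- apply: (@atleast_card_sub _ [pred e : seq_sub E | upb g (val e) c t]
    (fun e => exists s, t < s < ahi g W /\ seg e (mkpt g s c)) _ hu).
  move=> x /andP [/andP [htr h1] h2].
  by exists (tau g (val x) c); rewrite h1 h2; split => //; exact: trans_seg.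
- apply: (@atleast_card_sub _ [pred e : seq_sub E | dnb g (val e) c t]
    (fun e => exists s, alo g W < s < t /\ seg e (mkpt g s c)) _ hd).
  move=> x /andP [/andP [htr h1] h2].
  by exists (tau g (val x) c); rewrite h1 h2; split => //; exact: trans_seg.
Qed.

Lemma bbox_mkpt g i (s c : R) : bbox (P i) (mkpt g s c) <->
  (A1 g i <= s <= A2 g i) /\ (C1 g i <= c <= C2 g i).
Proof.
rewrite /bbox /mkpt /A1 /A2 /C1 /C2 /X1 /X2 /Y1 /Y2; case: g => /=; split.
- by [].
- by [].
- by move=> [? ?]; split.
- by move=> [? ?]; split.
Qed.

Lemma Hb_RD g (c t : R) : Hb g c t -> RD g c t.
Proof.
rewrite /Hb => /andP [/andP [/andP [_ hW] hu] hd].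
have hW' := hW; move/andP: hW' => [/andP [hc1 hc2] /andP [ht1 ht2]].
split; first exact/intW_mkpt.
split.
- apply: (@atleast_card_I _ [pred i | rup g i c t]
    (fun i => exists s, t < s < ahi g W /\ bbox (P i) (mkpt g s c)) _ hu) => i /andP [/andP [/andP [hC h1] h2] h3].
  have hh : forall s, t < s < ahi g W -> A1 g i <= s <= A2 g i ->
      exists s, t < s < ahi g W /\ bbox (P i) (mkpt g s c).
    by move=> s hs1 hs2; exists s; split => //; apply/bbox_mkpt; split.
  have [ht|ht] := ltP t (A1 g i).
    by apply: (hh (A1 g i)); apply/andP; split; lra.
  have [ha|ha] := leP (A2 g i) ((t + ahi g W) / 2).
    by apply: (hh (A2 g i)); apply/andP; split; lra.
  by apply: (hh ((t + ahi g W) / 2)); apply/andP; split; lra.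
- apply: (@atleast_card_I _ [pred i | rdn g i c t]
    (fun i => exists s, alo g W < s < t /\ bbox (P i) (mkpt g s c)) _ hd) => i /andP [/andP [/andP [hC h1] h2] h3].
  have hh : forall s, alo g W < s < t -> A1 g i <= s <= A2 g i ->
      exists s, alo g W < s < t /\ bbox (P i) (mkpt g s c).
    by move=> s hs1 hs2; exists s; split => //; apply/bbox_mkpt; split.
  have [ht|ht] := ltP (A2 g i) t.
    by apply: (hh (A2 g i)); apply/andP; split; lra.
  have [ha|ha] := leP ((alo g W + t) / 2) (A1 g i).
    by apply: (hh (A1 g i)); apply/andP; split; lra.
  by apply: (hh ((alo g W + t) / 2)); apply/andP; split; lra.
Qed.

Lemma notin_badl g e (c : R) : e \in E -> c \notin badl g ->
  c != acr g e.1 /\ c != acr g e.2.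
Proof.
move=> he hc; split; apply/eqP => h; move: hc; rewrite h /badl mem_cat.
- by rewrite (map_f (fun e => acr g e.1) he).
- by rewrite (map_f (fun e => acr g e.2) he) orbT.
Qed.

Arguments notin_badl {g e c}.
Arguments seg_trans {g e s c}.

Lemma cutE_char g (c z : R) : c \notin badl g -> cutE E W g c z ->
  exists e, [/\ e \in E, trans g e c, z = tau g e c & alo g W < z < ahi g W].
Proof.
move=> hc [hW [e [he hs]]].
have [h1 h2] := notin_badl he hc.
have [htr hz] := seg_trans h1 h2 hs.
exists e; split => //.
by move/intW_mkpt: hW => /andP [_ ->].
Qed.

Arguments cutE_char {g c z}.

Lemma cutE_finite g (c : R) : c \notin badl g ->
  cutE E W g c `<=` [set` map (tau g ^~ c) E].
Proof.
move=> hc z /(cutE_char hc) [e [he _ -> _]] /=.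
exact: (map_f (tau g ^~ c) he).
Qed.

Arguments cutE_finite {g c}.

Lemma closed_finR (A : set R) : finite_set A -> closed A.
Proof.
have := (@accessible_finite_set_closed R).1; apply.
apply: hausdorff_accessible; exact: Rhausdorff.
Qed.

Lemma endpts_sub g (c : R) : c \notin badl g ->
  endpts (cutE E W g c) `<=` cutE E W g c.
Proof.
move=> hc z [hz _].
have hcl : closed (cutE E W g c).
  apply: closed_finR; apply: sub_finite_set (cutE_finite hc) _.
  exact: finite_seq.
by move/closure_id: hcl => ->.
Qed.

Arguments endpts_sub {g c}.

Lemma mspan_sub g (c : R) : (0 < m)%N -> clo g W < c < chi g W ->
  c \notin badl g ->
  mspan m E W g c `<=`
  [set t | Gs g (c, t)] `|` [set` (map (tau g ^~ c) E ++ badl (~~ g))].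
Proof.
move=> m0 hc hb t [[s1 [u1 [sz1 h1]]] [s2 [u2 [sz2 h2]]]].
have [tin|tnin] := boolP (t \in map (tau g ^~ c) E ++ badl (~~ g)).
  by right.
left; rewrite /Gs /Gb /=.
move: tnin; rewrite mem_cat negb_or => /andP [tn1 tn2].
have hz : forall z, endpts (cutE E W g c) z ->
    exists e, [/\ e \in E, trans g e c, z = tau g e c & alo g W < z < ahi g W].
  by move=> z /(endpts_sub hb) /(cutE_char hb).
have zne : forall e, e \in E -> t != tau g e c.
  move=> e he; apply/eqP => h; move: tn1; rewrite h.
  by rewrite (map_f (tau g ^~ c) he).
case: s1 u1 sz1 h1 => [|z1 s1] u1 sz1 h1; first by move: sz1; rewrite leqn0 => /eqP h; move: m0; rewrite h.
case: s2 u2 sz2 h2 => [|z2 s2] u2 sz2 h2; first by move: sz2; rewrite leqn0 => /eqP h; move: m0; rewrite h.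
have [hz1 hz1t] := h1 z1 (mem_head _ _).
have [hz2 hz2t] := h2 z2 (mem_head _ _).
have [e1 [_ _ _ /andP [a1 _]]] := hz _ hz1.
have [e2 [_ _ _ /andP [_ a2]]] := hz _ hz2.
rewrite hb tn2 /inWb hc /=.
have -> : alo g W < t < ahi g W.
  by apply/andP; split; [exact: lt_le_trans a1 hz1t | exact: le_lt_trans hz2t a2].
rewrite /=; apply/andP; split.
- apply: (leq_trans sz2).
  rewrite cardE -(size_map (fun x : seq_sub E => tau g (val x) c)).
  apply: uniq_leq_size => // z hzs.
  have [hze hzt] := h2 z hzs.
  have [e [he htr hze' /andP [_ hza]]] := hz _ hze.
  apply/mapP; exists (SeqSub he); last by [].
  rewrite mem_enum inE /= /upb htr -hze' hza andbT lt_neqAle hzt andbT.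
  by rewrite hze' zne.
- apply: (leq_trans sz1).
  rewrite cardE -(size_map (fun x : seq_sub E => tau g (val x) c)).
  apply: uniq_leq_size => // z hzs.
  have [hze hzt] := h1 z hzs.
  have [e [he htr hze' /andP [hza _]]] := hz _ hze.
  apply/mapP; exists (SeqSub he); last by [].
  rewrite mem_enum inE /= /dnb htr -hze' hza /= lt_neqAle hzt andbT.
  by rewrite hze' eq_sym zne.
Qed.

Definition boxl g : seq R := [seq A1 g i | i <- enum 'I_k] ++ [seq A2 g i | i <- enum 'I_k].

Lemma crossed_char g (c : R) i : crossed P W g c i ->
  [/\ alo g W < A1 g i, A1 g i <= A2 g i, A2 g i < ahi g W,
      C1 g i <= c <= C2 g i & (entry_a P W g c i = A1 g i /\
      entry_b P W g c i = A2 g i)].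
Proof.
move=> [[s [hs /bbox_mkpt [/andP [hs1 hs2] hC]]] [na nb]].
have h1 : alo g W < A1 g i.
  rewrite ltNge; apply/negP => h; apply: na; apply/bbox_mkpt; split => //.
  by rewrite h /=; move/andP: hs => [hs3 _]; exact: le_trans hs3 hs2.
have h2 : A2 g i < ahi g W.
  rewrite ltNge; apply/negP => h; apply: nb; apply/bbox_mkpt; split => //.
  by rewrite h andbT; move/andP: hs => [_ hs3]; exact: le_trans hs1 hs3.
have h12 : A1 g i <= A2 g i by exact: le_trans hs1 hs2.
have hbox : box_on_cut P W g c i = `[A1 g i, A2 g i]%classic.
  apply/seteqP; split => x /=.
    by move=> [_ /bbox_mkpt [hx _]]; rewrite in_itv /=.
  rewrite in_itv /= => /andP [hx1 hx2]; split.
    by apply/andP; split; [exact: ltW (lt_le_trans h1 hx1)|exact: ltW (le_lt_trans hx2 h2)].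
  by apply/bbox_mkpt; split => //; apply/andP.
split => //; split.
- by rewrite /entry_a hbox inf_itvcc.
- by rewrite /entry_b hbox sup_itvcc.
Qed.

Arguments crossed_char {g c i}.

Lemma rspan_sub g (c : R) : (0 < M)%N -> clo g W < c < chi g W ->
  c \notin badl g ->
  rspan M P W g c `<=`
  [set t | Hs g (c, t)] `|` [set` (boxl g ++ badl (~~ g))].
Proof.
move=> M0 hc hb t [_ [[s1 [u1 [sz1 h1]]] [s2 [u2 [sz2 h2]]]]].
have [tin|tnin] := boolP (t \in boxl g ++ badl (~~ g)).
  by right.
left; rewrite /Hs /Hb /=.
move: tnin; rewrite mem_cat negb_or /boxl mem_cat negb_or => /andP [/andP [tn1 tn2] tn3].
have ne1 : forall i, t != A1 g i.
  move=> i; apply/eqP => h; move: tn1; rewrite h.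
  by rewrite (map_f (A1 g)) // mem_enum.
have ne2 : forall i, t != A2 g i.
  move=> i; apply/eqP => h; move: tn2; rewrite h.
  by rewrite (map_f (A2 g)) // mem_enum.
case: s1 u1 sz1 h1 => [|i1 s1] u1 sz1 h1; first by move: sz1; rewrite leqn0 => /eqP h; move: M0; rewrite h.
case: s2 u2 sz2 h2 => [|i2 s2] u2 sz2 h2; first by move: sz2; rewrite leqn0 => /eqP h; move: M0; rewrite h.
have [hi1 hi1t] := h1 i1 (mem_head _ _).
have [hi2 hi2t] := h2 i2 (mem_head _ _).
have [a1 _ _ _ [ea _]] := crossed_char hi1.
have [_ _ a2 _ [_ eb]] := crossed_char hi2.
rewrite hb tn3 /inWb hc /=.
have -> : alo g W < t < ahi g W.
  apply/andP; split.
    by apply: (lt_le_trans a1); rewrite -ea.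
  by apply: (le_lt_trans _ a2); rewrite -eb.
rewrite /=; apply/andP; split.
- apply: (leq_trans sz2); rewrite cardE.
  apply: uniq_leq_size => // i his.
  have [hi hit] := h2 i his.
  have [x1 x2 x3 x4 [x5 x6]] := crossed_char hi.
  rewrite mem_enum inE /rup x4 /= (le_lt_trans x2 x3) x2 andbT /=.
  by rewrite lt_neqAle ne2 -x6 hit.
- apply: (leq_trans sz1); rewrite cardE.
  apply: uniq_leq_size => // i his.
  have [hi hit] := h1 i his.
  have [x1 x2 x3 x4 [x5 x6]] := crossed_char hi.
  rewrite mem_enum inE /rdn x4 /= (lt_le_trans x1 x2) x2 andbT /= andbT.
  by rewrite lt_neqAle eq_sym ne1 -x5 hit.
Qed.

Notation lam := (@lebesgue_measure R).

Lemma lm_le {A B : set R} : A `<=` B -> (lam A <= lam B)%E.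
Proof.
move=> AB; rewrite /lebesgue_measure /lebesgue_stieltjes_measure /measure_extension.
exact: le_mu_ext.
Qed.

Lemma fin_meas (s : seq R) : measurable [set` s].
Proof.
apply: countable_measurable; first by move=> t; exact: measurable_set1.
exact/finite_set_countable/finite_seq.
Qed.

Lemma fin_null (s : seq R) : lam [set` s] = 0%E.
Proof. exact/countable_lebesgue_measure0/finite_set_countable/finite_seq. Qed.

Lemma lm_fin (A B : set R) (s : seq R) : measurable B ->
  A `<=` B `|` [set` s] -> (lam A <= lam B)%E.
Proof.
move=> mB AB; have h1 := lm_le AB.
have h2 := measureU2 lam mB (fin_meas s).
have h3 : (lam B + lam [set` s] <= lam B)%E by rewrite fin_null adde0.
exact: le_trans h1 (le_trans h2 h3).
Qed.

Lemma fubini_sec (A : set (R * R)) : measurable A ->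
  (\int[lam]_x lam (xsection A x) = \int[lam]_y lam (ysection A y))%E.
Proof.
move=> mA; have := indic_fubini_tonelli lam lam mA.
by rewrite indic_fubini_tonelli_FE // indic_fubini_tonelli_GE.
Qed.

Lemma meas_xsec (A : set (R * R)) : measurable A ->
  measurable_fun setT (fun x => lam (xsection A x)).
Proof. move=> mA; exact: (measurable_fun_xsection lam mA). Qed.

Lemma meas_ysec (A : set (R * R)) : measurable A ->
  measurable_fun setT (fun x => lam (ysection A x)).
Proof. move=> mA; exact: (measurable_fun_ysection lam mA). Qed.

Arguments meas_xsec {A}.
Arguments meas_ysec {A}.

Lemma strict_int (F1 F2 : R -> \bar R) (D : set R) :
  measurable_fun setT F1 -> measurable_fun setT F2 ->
  (forall x, (0 <= F1 x)%E) -> (forall x, F1 x \is a fin_num) ->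
  (\int[lam]_x F1 x < +oo)%E ->
  (forall x, (F1 x <= F2 x)%E) -> measurable D -> (0 < lam D)%E ->
  (forall x, D x -> (F1 x < F2 x)%E) ->
  (\int[lam]_x F1 x < \int[lam]_x F2 x)%E.
Proof.
move=> mF1 mF2 F10 F1f iF1 F12 mD D0 FD.
rewrite ltNge; apply/negP => hle.
pose h := fun x => (F2 x - F1 x)%E.
have h0 x : (0 <= h x)%E by rewrite /h suber_ge0.
have mh : measurable_fun setT h by exact: emeasurable_funB.
have eF2 : (\int[lam]_x F2 x = \int[lam]_x F1 x + \int[lam]_x h x)%E.
  rewrite -ge0_integralD //; apply: eq_integral => x _.
  by rewrite /h addeC subeK.
have iF1f : (\int[lam]_x F1 x)%E \is a fin_num.
  by rewrite ge0_fin_numE // integral_ge0.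
have ih : (\int[lam]_x h x = 0)%E.
  apply/eqP; rewrite eq_le integral_ge0 // andbT.
  rewrite leNgt; apply/negP => hp; move: hle; rewrite eF2.
  by rewrite leNgt lteDl // hp.
have : (\int[lam]_x `|h x| = 0)%E.
  by rewrite -ih; apply: eq_integral => x _; rewrite gee0_abs.
move/(ae_eq_integral_abs lam measurableT mh) => [N [mN N0 hN]].
have : (lam D <= lam N)%E.
  apply: le_measure; rewrite ?inE //.
  move=> x Dx; apply: hN => /= hx.
  have := FD x Dx; rewrite -sube_gt0 -/(h x) hx //; rewrite ltxx.
  by [].
by rewrite N0 leNgt D0.
Qed.

Lemma xsecE (A : set (R * R)) (c : R) : xsection A c = [set t | A (c, t)].
Proof. by apply/seteqP; split => t /=; rewrite /xsection /= inE. Qed.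

Lemma ysecE (A : set (R * R)) (t : R) : ysection A t = [set c | A (c, t)].
Proof. by apply/seteqP; split => c /=; rewrite /ysection /= inE. Qed.

Lemma alo_neg g : alo (~~ g) W = clo g W. Proof. by case: g. Qed.
Lemma ahi_neg g : ahi (~~ g) W = chi g W. Proof. by case: g. Qed.
Lemma clo_neg g : clo (~~ g) W = alo g W. Proof. by case: g. Qed.
Lemma chi_neg g : chi (~~ g) W = ahi g W. Proof. by case: g. Qed.

Lemma Gb_good g (c t : R) : Gb g c t -> [&& (clo g W < c < chi g W), (c \notin badl g),
  (alo g W < t < ahi g W) & (t \notin badl (~~ g))].
Proof.
rewrite /Gb /inWb => /andP [/andP [/andP [/andP [hc ht] /andP [h1 h2]] _] _].
by rewrite hc h1 h2 ht.
Qed.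

Lemma Hb_good g (c t : R) : Hb g c t -> [&& (clo g W < c < chi g W), (c \notin badl g),
  (alo g W < t < ahi g W) & (t \notin badl (~~ g))].
Proof.
rewrite /Hb /inWb => /andP [/andP [/andP [/andP [hc ht] /andP [h1 h2]] _] _].
by rewrite hc h1 h2 ht.
Qed.

Definition good g (c : R) := (clo g W < c < chi g W) && (c \notin badl g).

Definition F2 g (c : R) := (lam (xsection (Gs g) c) + lam (xsection (Hs g) c))%E.
Definition F1 g (c : R) := (lam (ysection (Gs (~~ g)) c) + lam (ysection (Hs (~~ g)) c))%E.

Lemma F2_out g c : ~~ good g c -> F2 g c = 0%E.
Proof.
move=> hg; rewrite /F2 !xsecE.
have -> : [set t | Gs g (c, t)] = set0.
  apply/seteqP; split => t //= /Gb_good /and4P [hh1 hh2 _ _]; move: hg; rewrite /good hh1 hh2.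
  by [].
have -> : [set t | Hs g (c, t)] = set0.
  apply/seteqP; split => t //= /Hb_good /and4P [hh1 hh2 _ _]; move: hg; rewrite /good hh1 hh2.
  by [].
by rewrite measure0 adde0.
Qed.

Lemma F1_out g c : ~~ good g c -> F1 g c = 0%E.
Proof.
move=> hg; rewrite /F1 !ysecE.
have -> : [set t | Gs (~~ g) (t, c)] = set0.
  apply/seteqP; split => t //= /Gb_good /and4P [_ _]; rewrite alo_neg ahi_neg negbK => hh1 hh2.
  by move: hg; rewrite /good hh1 hh2.
have -> : [set t | Hs (~~ g) (t, c)] = set0.
  apply/seteqP; split => t //= /Hb_good /and4P [_ _]; rewrite alo_neg ahi_neg negbK => hh1 hh2.
  by move: hg; rewrite /good hh1 hh2.
by rewrite measure0 adde0.
Qed.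

Lemma bounded_int (F : R -> \bar R) (a b K : R) : measurable_fun setT F ->
  (forall x, (0 <= F x)%E) -> (0 <= K)%R ->
  (forall x, (F x <= K%:E * (\1_(`]a, b[%classic) x)%:E)%E) ->
  (\int[lam]_x F x < +oo)%E.
Proof.
move=> mF F0 K0 FK.
have mI : measurable (`]a, b[%classic : set R) by exact: measurable_itv.
have mi : measurable_fun setT (fun x => (\1_(`]a, b[%classic) x)%:E : \bar R).
  by apply/measurable_EFinP; exact: measurable_indic.
apply: (le_lt_trans (ge0_le_integral lam measurableT (fun x _ => F0 x) mF _
    (fun x _ => FK x))).
  exact: (emeasurable_funM (measurable_cst _) mi).
have h1 : forall x, [set: R] x -> (0 <= (\1_(`]a, b[%classic) x)%:E :> \bar R)%E.
  by move=> x _; rewrite lee_fin.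
rewrite (ge0_integralZl lam measurableT mi h1) ?lee_fin //.
rewrite integral_indic // setIT.
have hI : (lam `]a, b[%classic < +oo)%E.
  by rewrite lebesgue_measure_itv; case: ifP => _; rewrite ?ltry // -EFinB ltry.
apply: lte_mul_pinfty => //; by rewrite lee_fin.
Qed.

Lemma wf_c g : window_wf W -> clo g W < chi g W.
Proof. by case: g => -[]. Qed.
Lemma wf_a g : window_wf W -> alo g W < ahi g W.
Proof. by case: g => -[]. Qed.

Lemma F1_le_charge g (c : R) : (F1 g c <= chargeable m M E P W g c)%E.
Proof.
rewrite /F1 /chargeable; apply: leeD; apply: lm_le; rewrite ysecE => t /=.
- by move/Gb_Dk/mdark_of_Dk.
- by move/Hb_RD/Mrdark_of_RD.
Qed.

Lemma span_le_F2 g (c : R) : (0 < m)%N -> (0 < M)%N -> good g c ->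
  (lam (mspan m E W g c) + lam (rspan M P W g c) <= F2 g c)%E.
Proof.
move=> m0 M0 /andP [hc hb]; rewrite /F2; apply: leeD.
- apply: (@lm_fin _ _ (map (tau g ^~ c) E ++ badl (~~ g))).
    exact: measurable_xsection c (measurable_Gs g).
  by rewrite xsecE; exact: mspan_sub.
- apply: (@lm_fin _ _ (boxl g ++ badl (~~ g))).
    exact: measurable_xsection c (measurable_Hs g).
  by rewrite xsecE; exact: rspan_sub.
Qed.

Lemma F_strict g (c : R) : (0 < m)%N -> (0 < M)%N ->
  (forall h c, ~ favorable m M E P W h c) -> good g c -> (F1 g c < F2 g c)%E.
Proof.
move=> m0 M0 nf hg.
have hcut : is_cut W g c.
  by move: hg => /andP [/andP [h1 h2] _]; rewrite /is_cut (ltW h1) (ltW h2).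
have : ~ (lam (mspan m E W g c) + lam (rspan M P W g c) <= chargeable m M E P W g c)%E.
  by move=> h; apply: (nf g c); split.
move/negP; rewrite -ltNge => hlt.
have h1 := F1_le_charge g c; have h2 := span_le_F2 g c m0 M0 hg.
have h3 := lt_le_trans hlt h2.
exact: le_lt_trans h1 h3.
Qed.

Lemma F_le g (c : R) : (0 < m)%N -> (0 < M)%N ->
  (forall h c, ~ favorable m M E P W h c) -> (F1 g c <= F2 g c)%E.
Proof.
move=> m0 M0 nf; have [hg|hg] := boolP (good g c).
  exact/ltW/F_strict.
by rewrite F1_out // F2_out.
Qed.

Lemma ysec_itv g (c : R) (A : set (R * R)) :
  (A = Gs (~~ g) \/ A = Hs (~~ g)) ->
  ysection A c `<=` `]clo (~~ g) W, chi (~~ g) W[%classic.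
Proof.
move=> hA; rewrite ysecE => t /=; rewrite in_itv /=.
by case: hA => -> /=; [move/Gb_good|move/Hb_good] => /and4P [].
Qed.

Arguments ysec_itv {g c A}.

Lemma lam_itv (a b : R) : a < b -> lam `]a, b[%classic = (b - a)%:E.
Proof. by move=> ab; rewrite lebesgue_measure_itv lte_fin ab -EFinB. Qed.

Lemma ysec_fin g (c : R) (A : set (R * R)) : window_wf W ->
  (A = Gs (~~ g) \/ A = Hs (~~ g)) ->
  (lam (ysection A c) <= (chi (~~ g) W - clo (~~ g) W)%:E)%E.
Proof.
move=> wf hA; rewrite -lam_itv; last exact: wf_c.
exact: lm_le (ysec_itv hA).
Qed.

Lemma intF1 g : (\int[lam]_x F1 g x = \int[lam]_x F2 (~~ g) x)%E.
Proof.
have p0 : forall (f : R -> set R) (x : R), [set: R] x -> (0 <= lam (f x))%E.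
  by move=> f x _; exact: measure_ge0.
rewrite /F1 /F2.
rewrite (ge0_integralD lam measurableT (p0 (ysection (Gs (~~ g)))) (meas_ysec (measurable_Gs (~~ g)))
  (p0 (ysection (Hs (~~ g)))) (meas_ysec (measurable_Hs (~~ g)))).
rewrite -fubini_sec; last exact: measurable_Gs.
rewrite -fubini_sec; last exact: measurable_Hs.
rewrite (ge0_integralD lam measurableT (p0 (xsection (Gs (~~ g)))) (meas_xsec (measurable_Gs (~~ g)))
  (p0 (xsection (Hs (~~ g)))) (meas_xsec (measurable_Hs (~~ g)))).
by [].
Qed.

Lemma key g : window_wf W -> (0 < m)%N -> (0 < M)%N ->
  (forall h c, ~ favorable m M E P W h c) ->
  (\int[lam]_x F2 (~~ g) x < \int[lam]_x F2 g x)%E.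
Proof.
move=> wf m0 M0 nf; rewrite -intF1.
set L := chi (~~ g) W - clo (~~ g) W.
have L0 : 0 <= L by rewrite subr_ge0 ltW // wf_c.
have F1b x : (F1 g x <= (L + L)%:E)%E.
  rewrite EFinD; apply: leeD; apply: ysec_fin => //; by [left|right].
pose D := (`]clo g W, chi g W[%classic `\` [set` badl g]) : set R.
have mD : measurable D by apply: measurableD; [exact: measurable_itv|exact: fin_meas].
apply: (@strict_int _ _ D).
- by apply: emeasurable_funD; [exact: meas_ysec (measurable_Gs (~~ g))|exact: meas_ysec (measurable_Hs (~~ g))].
- by apply: emeasurable_funD; [exact: meas_xsec (measurable_Gs g)|exact: meas_xsec (measurable_Hs g)].
- by move=> x; apply: adde_ge0; exact: measure_ge0.
- move=> x; rewrite ge0_fin_numE; last by apply: adde_ge0; exact: measure_ge0.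
  exact: le_lt_trans (F1b x) (ltry _).
- apply: (@bounded_int _ (clo g W) (chi g W) (L + L)).
  + by apply: emeasurable_funD; [exact: meas_ysec (measurable_Gs (~~ g))|exact: meas_ysec (measurable_Hs (~~ g))].
  + by move=> x; apply: adde_ge0; exact: measure_ge0.
  + by rewrite addr_ge0.
  + move=> x; have [hg|hg] := boolP (good g x).
      have hx : (`]clo g W, chi g W[%classic : set R) x.
        by move: hg => /andP [h1 _]; rewrite /= in_itv /=.
      by rewrite indicE mem_set // mule1; exact: F1b.
    by rewrite F1_out //; apply: mule_ge0; rewrite lee_fin // addr_ge0.
- by move=> x; exact: F_le.
- exact: mD.
- have : (lam `]clo g W, chi g W[%classic <= lam D)%E.
    apply: (@lm_fin _ _ (badl g)) => // x hx.
    have [hb|hb] := boolP (x \in badl g); first by right.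
    by left; split => //=; apply/negP.
  rewrite lam_itv; last exact: wf_c.
  apply: lt_le_trans; rewrite lte_fin subr_gt0; exact: wf_c.
- move=> x [hx hb]; apply: F_strict => //.
  rewrite /good; move: hx; rewrite /= in_itv /= => ->.
  by apply/negP.
Qed.

Lemma main_sec : window_wf W -> (0 < m)%N -> (0 < M)%N ->
  exists (h : bool) (c : R), favorable m M E P W h c.
Proof.
move=> wf m0 M0.
have [//|nex] := pselect (exists (h : bool) (c : R), favorable m M E P W h c).
have nf : forall h c, ~ favorable m M E P W h c.
  by move=> h c hf; apply: nex; exists h, c.
have k1 := key true wf m0 M0 nf.
have k2 := key false wf m0 M0 nf.
by have := lt_trans k1 k2; rewrite ltxx.
Qed.

End Geo.

Theorem lemma3p1 (R : realType) (E : seq (edge R)) (k : nat)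
  (P : 'I_k -> set (pt2 R)) (alpha : R) (W0 W : window R) (m M : nat) :
  planar_straight_line E ->
  window_wf W0 -> window_wf W -> subwindow W W0 ->
  0 < alpha ->
  (forall i, region (P i)) ->
  (forall i, fat alpha (P i)) ->
  (forall i j, i != j -> P i `&` P j = set0) ->
  (forall i, P i `<=` inW W0) ->
  (0 < m)%N -> (0 < M)%N ->
  exists (h : bool) (c : R), favorable m M E P W h c.
Proof.
move=> _ _ wfW _ _ _ _ _ _ m0 M0.
exact: main_sec.
Qed.
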